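(* Let $R$ be a simple ring, $I$ a non-empty countable set, $D=\{\delta_i\mid i\in I\}$ a family of derivations of $R$, $X=\{x_i\mid i\in I\}$ a set of distinct non-commuting indeterminates, and suppose $S=R[X;D]$ is left quasi-duo or right quasi-duo. Then $R$ is a field, $\delta_i=0$ for all $i\in I$, and $|I|=1$.
   Context: All rings are unital and associative. A derivation of $R$ is an additive map $\delta:R\to R$ with $\delta(rs)=r\delta(s)+\delta(r)s$. The differential polynomial ring in several indeterminates $R[X;D]$ is the set of all (noncommutative) polynomials in the indeterminates $x_i\in X$ (finite $R$-linear combinations of monomials, i.e. finite words in the alphabet $X$, with coefficients on the left), with natural addition and multiplication generated by $x_ia=ax_i+\delta_i(a)$ for $a\in R$, $i\in I$. A ring is left (right) quasi-duo if every maximal left (right) ideal is two-sided. *)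

(* Defs.v *)
From mathcomp Require Import all_boot all_order all_algebra.
Set Implicit Arguments. Unset Strict Implicit. Unset Printing Implicit Defensive.
Import GRing.Theory.
Local Open Scope ring_scope.

Definition is_derivation (R : nzRingType) (d : R -> R) : Prop :=
  (forall a b, d (a + b) = d a + d b) /\
  (forall a b, d (a * b) = a * d b + d a * b).

Definition ring_ideal (R : nzRingType) (J : R -> Prop) : Prop :=
  [/\ J 0, (forall a b, J a -> J b -> J (a + b)), (forall a, J a -> J (- a)),
      (forall r a, J a -> J (r * a)) & (forall r a, J a -> J (a * r))].

Definition simple_ring (R : nzRingType) : Prop :=
  forall J : R -> Prop, ring_ideal J -> (forall a, J a -> a = 0) \/ (forall a, J a).

Definition is_field (R : nzRingType) : Prop :=
  (forall a b : R, a * b = b * a) /\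
  (forall a : R, a != 0 -> exists b, a * b = 1 /\ b * a = 1).

(* An element of S is represented by a formal finite sum
     sum_k  a_k x_{w_k}
   encoded as a list of pairs (a_k, w_k), where w_k : seq I is a word
   (a monomial in the non-commuting indeterminates x_i), coefficients
   on the left.  Two representations denote the same element of S iff
   they have the same coefficient function [dcoef]. *)

Section DiffPoly.
Variables (R : nzRingType) (I : countType) (d : I -> R -> R).

Definition dpoly := seq (R * seq I).

Definition dcoef (p : dpoly) (w : seq I) : R :=
  \sum_(t <- p | t.2 == w) t.1.

Definition deqv (p q : dpoly) : Prop := forall w, dcoef p w = dcoef q w.

Definition dzero : dpoly := [::].
Definition done_ : dpoly := [:: (1, [::])].
Definition dadd (p q : dpoly) : dpoly := p ++ q.
Definition dopp (p : dpoly) : dpoly := [seq (- t.1, t.2) | t <- p].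

(* x_w * b, rewritten with coefficients on the left using
   x_i a = a x_i + d_i(a). *)
Fixpoint dwmul (w : seq I) (b : R) : dpoly :=
  match w with
  | [::] => [:: (b, [::])]
  | i :: w' => flatten [seq [:: (c.1, i :: c.2); (d i c.1, c.2)] | c <- dwmul w' b]
  end.

(* (a x_w)(b x_v) = a (x_w b) x_v, extended bilinearly *)
Definition dmul (p q : dpoly) : dpoly :=
  flatten [seq [seq (s.1 * c.1, c.2 ++ t.2) | c <- dwmul s.2 t.1] | s <- p, t <- q].

(* A subset of S: a predicate on representations invariant under deqv. *)
Definition dsubset (L : dpoly -> Prop) : Prop :=
  forall p q, deqv p q -> L p -> L q.

Definition dadditive (L : dpoly -> Prop) : Prop :=
  [/\ dsubset L, L dzero, (forall p q, L p -> L q -> L (dadd p q))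
    & (forall p, L p -> L (dopp p))].

Definition left_ideal (L : dpoly -> Prop) : Prop :=
  dadditive L /\ (forall s p, L p -> L (dmul s p)).

Definition right_ideal (L : dpoly -> Prop) : Prop :=
  dadditive L /\ (forall s p, L p -> L (dmul p s)).

Definition two_sided_ideal (L : dpoly -> Prop) : Prop :=
  left_ideal L /\ right_ideal L.

Definition max_left_ideal (L : dpoly -> Prop) : Prop :=
  [/\ left_ideal L, (exists p, ~ L p)
    & forall L', left_ideal L' -> (forall p, L p -> L' p) ->
        (forall p, L' p -> L p) \/ (forall p, L' p)].

Definition max_right_ideal (L : dpoly -> Prop) : Prop :=
  [/\ right_ideal L, (exists p, ~ L p)
    & forall L', right_ideal L' -> (forall p, L p -> L' p) ->
        (forall p, L' p -> L p) \/ (forall p, L' p)].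

Definition left_quasi_duo : Prop :=
  forall L, max_left_ideal L -> two_sided_ideal L.

Definition right_quasi_duo : Prop :=
  forall L, max_right_ideal L -> two_sided_ideal L.

End DiffPoly.

(* Main.v *)
Require Import Defs.
From mathcomp Require Import all_boot all_order all_algebra.
From mathcomp Require Import boolp classical_sets.
Set Implicit Arguments. Unset Strict Implicit. Unset Printing Implicit Defensive.
Import GRing.Theory.
Local Open Scope ring_scope.

Section Main.
Variables (R : nzRingType) (I : countType) (d : I -> R -> R).

Definition Phi (F : R -> seq I -> R) (p : dpoly R I) : R := \sum_(t <- p) F t.1 t.2.
Definition addF (F : R -> seq I -> R) := forall w a b, F (a + b) w = F a w + F b w.
Definition FL (F : R -> seq I -> R) (p : dpoly R I) : Prop := Phi F p = 0.

Lemma add_zero (f : R -> R) : (forall x y, f (x + y) = f x + f y) -> f 0 = 0.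
Proof. by move=> h; apply: (addrI (f 0)); rewrite -h !addr0. Qed.

Lemma add_opp (f : R -> R) : (forall x y, f (x + y) = f x + f y) -> forall x, f (- x) = - f x.
Proof.
move=> h x; apply: (addrI (f x)); rewrite -h !subrr; exact: add_zero.
Qed.

Lemma add_sum (f : R -> R) (T : Type) (r : seq T) (g : T -> R) :
  (forall x y, f (x + y) = f x + f y) ->
  f (\sum_(x <- r) g x) = \sum_(x <- r) f (g x).
Proof.
move=> h; elim: r => [|x r IH]; first by rewrite !big_nil; exact: add_zero.
by rewrite !big_cons h IH.
Qed.

Lemma dcoefE (p : dpoly R I) w : dcoef p w = \sum_(t <- p) (if t.2 == w then t.1 else 0).
Proof. by rewrite /dcoef big_mkcond. Qed.

Lemma dcoef_cons t (p : dpoly R I) w :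
  dcoef (t :: p) w = (if t.2 == w then t.1 else 0) + dcoef p w.
Proof. by rewrite !dcoefE big_cons. Qed.

Lemma dcoef_nil w : dcoef (dzero R I) w = 0.
Proof. by rewrite dcoefE big_nil. Qed.

Lemma Phi_dcoef F (hF : addF F) (p : dpoly R I) (s : seq (seq I)) :
  uniq s -> {subset map snd p <= s} -> Phi F p = \sum_(w <- s) F (dcoef p w) w.
Proof.
move=> us; elim: p => [|t p IH] sub.
  rewrite /Phi big_nil big1 // => w _; rewrite dcoefE big_nil.
  exact: (add_zero (fun x => hF w x)).
rewrite /Phi big_cons.
have -> : \sum_(w <- s) F (dcoef (t :: p) w) w =
   \sum_(w <- s) F (if t.2 == w then t.1 else 0) w + \sum_(w <- s) F (dcoef p w) w.
  by rewrite -big_split /=; apply: eq_bigr => w _; rewrite dcoef_cons hF.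
rewrite -IH; last by move=> x hx; apply: sub; rewrite /= inE hx orbT.
congr (_ + _).
rewrite (bigD1_seq t.2) //=; last by apply: sub; rewrite /= inE eqxx.
rewrite eqxx big1 ?addr0 // => w /negbTE; rewrite eq_sym => ->.
exact: (add_zero (fun x => hF w x)).
Qed.

Lemma Phi_deqv F (hF : addF F) (p q : dpoly R I) : deqv p q -> Phi F p = Phi F q.
Proof.
move=> e.
rewrite (Phi_dcoef hF (s := undup (map snd (p ++ q)))) ?undup_uniq //; last first.
  by move=> x hx; rewrite mem_undup map_cat mem_cat hx.
rewrite (Phi_dcoef hF (s := undup (map snd (p ++ q)))) ?undup_uniq //; last first.
  by move=> x hx; rewrite mem_undup map_cat mem_cat hx orbT.
by apply: eq_bigr => w _; rewrite e.
Qed.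

Lemma FL_add F : addF F -> dadditive (FL F).
Proof.
move=> hF; split.
- by move=> p q e; rewrite /FL (Phi_deqv hF e).
- by rewrite /FL /Phi big_nil.
- move=> p q; rewrite /FL /Phi /dadd big_cat => -> ->; exact: addr0.
- move=> p; rewrite /FL /Phi /dopp big_map /= => h.
  rewrite (eq_bigr (fun t => - F t.1 t.2)); first by rewrite sumrN h oppr0.
  by move=> t _; apply: (add_opp (fun x => hF t.2 x)).
Qed.

Lemma Phi_dmul G (p q : dpoly R I) : Phi G (dmul d p q) =
  \sum_(s <- p) \sum_(t <- q) \sum_(c <- dwmul d s.2 t.1) G (s.1 * c.1) (c.2 ++ t.2).
Proof.
rewrite /Phi /dmul big_flatten /= big_allpairs_dep.
by apply: eq_bigr => s _; apply: eq_bigr => t _; rewrite big_map.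
Qed.


Lemma der0 (f : R -> R) : is_derivation f -> f 0 = 0.
Proof. by case=> ha _; exact: add_zero. Qed.

Lemma der1 (f : R -> R) : is_derivation f -> f 1 = 0.
Proof.
case=> ha hm; have := hm 1 1; rewrite !mul1r mulr1 => h.
by apply: (addrI (f 1)); rewrite -h addr0.
Qed.

Lemma dwmul_const b (Hb : forall i, d i b = 0) (Hz : forall i, d i 0 = 0) w c :
  c \in dwmul d w b -> c.1 = b \/ c.1 = 0.
Proof.
elim: w c => [|i w IH] c /=; first by rewrite inE => /eqP ->; left.
move/flattenP => [s /mapP [c' Hc' ->]]; rewrite !inE => /orP [/eqP -> | /eqP ->] /=.
  exact: IH.
by right; case: (IH c' Hc') => ->.
Qed.

Lemma dwmul_sumC b (Hb : forall i, d i b = 0) (Hz : forall i, d i 0 = 0) w :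
  forall F : R -> seq I -> R, (forall u, F 0 u = 0) ->
  \sum_(c <- dwmul d w b) F c.1 c.2 = F b w.
Proof.
elim: w => [|i w IH] F Fz /=; first by rewrite big_cons big_nil addr0.
rewrite big_flatten /= big_map.
rewrite (eq_big_seq (fun c => F c.1 (i :: c.2))).
  exact: (IH (fun x u => F x (i :: u))).
move=> c Hc /=; rewrite !big_cons big_nil /=.
by case: (dwmul_const Hb Hz Hc) => E; rewrite E ?Hb ?Hz !Fz !addr0.
Qed.

Definition lam (w : seq I) (b : R) : R := foldr (fun i x => d i x) b w.

Lemma lam_add (hder : forall i, is_derivation (d i)) w x y :
  lam w (x + y) = lam w x + lam w y.
Proof. by elim: w => [|i w IH] //=; rewrite IH (hder i).1. Qed.

Lemma lam_sum (hder : forall i, is_derivation (d i)) w b :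
  \sum_(c <- dwmul d w b) (if c.2 == [::] then c.1 else 0) = lam w b.
Proof.
elim: w => [|i w IH] /=; first by rewrite big_cons big_nil addr0 ?eqxx.
rewrite big_flatten /= big_map -IH (add_sum _ _ (hder i).1).
apply: eq_bigr => c _; rewrite !big_cons big_nil /= addr0 add0r.
by case: eqP => _ //; rewrite (der0 (hder i)).
Qed.

Definition Gk (x : R) (u : seq I) : R := if u == [::] then x else 0.

Lemma Gk_add : addF Gk.
Proof. by move=> w a b; rewrite /Gk; case: eqP => _ //; rewrite addr0. Qed.

Lemma cat_cons_nil (s : seq I) j u : (s ++ j :: u == [::]) = false.
Proof. by case: s. Qed.

Lemma kap_dmul (hder : forall i, is_derivation (d i)) s p :
  Phi Gk (dmul d s p) = \sum_(x <- s) x.1 * lam x.2 (Phi Gk p).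
Proof.
rewrite Phi_dmul; apply: eq_bigr => x _.
rewrite /Phi (add_sum _ _ (lam_add hder x.2)) mulr_sumr.
apply: eq_bigr => -[a [|j u]] _ /=.
  rewrite /Gk eqxx -lam_sum // mulr_sumr; apply: eq_bigr => c _.
  by rewrite cats0; case: eqP => _ //; rewrite mulr0.
rewrite /Gk /= big1; last by move=> c _; rewrite cat_cons_nil.
by rewrite (add_zero (lam_add hder x.2)) mulr0.
Qed.

Fixpoint rho0 (a : R) (w : seq I) : R :=
  match w with [::] => a | i :: w' => - rho0 (d i a) w' end.

Lemma rho0_add (hder : forall i, is_derivation (d i)) : addF rho0.
Proof.
move=> w; elim: w => [|i w IH] a b //=.
by rewrite (hder i).1 IH opprD.
Qed.

Lemma rho0_cat (hder : forall i, is_derivation (d i)) u v a :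
  rho0 a (u ++ v) = rho0 (rho0 a u) v.
Proof.
elim: u a => [|i u IH] a //=.
by rewrite IH (add_opp (rho0_add hder v)).
Qed.

Lemma rho_sum (hder : forall i, is_derivation (d i)) b w : forall a,
  \sum_(c <- dwmul d w b) rho0 (a * c.1) c.2 = rho0 a w * b.
Proof.
elim: w => [|i w IH] a /=; first by rewrite big_cons big_nil addr0.
rewrite big_flatten /= big_map.
transitivity (\sum_(c <- dwmul d w b) - rho0 (d i a * c.1) c.2).
  apply: eq_bigr => c _; rewrite !big_cons big_nil /= addr0 (hder i).2.
  by rewrite (rho0_add hder) opprD addrAC addNr add0r.
by rewrite sumrN IH mulNr.
Qed.

Lemma rho_dmul (hder : forall i, is_derivation (d i)) p q :
  Phi rho0 (dmul d p q) = \sum_(t <- q) rho0 (Phi rho0 p * t.1) t.2.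
Proof.
rewrite Phi_dmul exchange_big /=; apply: eq_bigr => t _.
rewrite /Phi mulr_suml (add_sum _ _ (rho0_add hder t.2)).
apply: eq_bigr => s _.
rewrite -(rho_sum hder) (add_sum _ _ (rho0_add hder t.2)).
by apply: eq_bigr => c _; rewrite (rho0_cat hder).
Qed.

Lemma Phi_dmul0 (hd0 : forall i a, d i a = 0) G (hG : addF G) p q :
  Phi G (dmul d p q) = \sum_(s <- p) \sum_(t <- q) G (s.1 * t.1) (s.2 ++ t.2).
Proof.
rewrite Phi_dmul; apply: eq_bigr => s _; apply: eq_bigr => t _.
rewrite (dwmul_sumC (b := t.1) (fun i => hd0 i _) (fun i => hd0 i _) _
   (F := fun x u => G (s.1 * x) (u ++ t.2))) //.
by move=> u; rewrite mulr0; exact: (add_zero (hG (u ++ t.2))).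
Qed.

Definition Gw (w : seq I) (x : R) (u : seq I) : R := if u == w then x else 0.

Lemma Gw_add w : addF (Gw w).
Proof. by move=> u a b; rewrite /Gw; case: eqP => _ //; rewrite addr0. Qed.

Lemma dcoef_Phi p w : dcoef p w = Phi (Gw w) p.
Proof. by rewrite dcoefE. Qed.

Lemma dmul_unitr (hder : forall i, is_derivation (d i)) s :
  deqv (dmul d s (done_ R I)) s.
Proof.
move=> w; rewrite !dcoef_Phi Phi_dmul; apply: eq_bigr => t _.
rewrite big_cons big_nil addr0.
rewrite (dwmul_sumC (b := 1) _ _ _ (F := fun x u => Gw w (t.1 * x) (u ++ [::]))) /=.
- by rewrite mulr1 cats0.
- by move=> i; exact: der1.
- by move=> i; exact: der0.
- by move=> u; rewrite mulr0 /Gw; case: eqP.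
Qed.

Lemma dmul_unitl (s : dpoly R I) : deqv (dmul d (done_ R I) s) s.
Proof.
move=> w; rewrite !dcoef_Phi Phi_dmul big_cons big_nil addr0.
by apply: eq_bigr => t _; rewrite big_cons big_nil addr0 /= mul1r.
Qed.


Definition gideal (m : dpoly R I -> dpoly R I -> dpoly R I) (L : dpoly R I -> Prop) :=
  dadditive L /\ forall s p, L p -> L (m s p).

Local Open Scope classical_set_scope.

Lemma key m (Hunit : forall s, deqv (m s (done_ R I)) s)
  (Hqd : forall L, [/\ gideal m L, (exists p, ~ L p) &
          forall L', gideal m L' -> (forall p, L p -> L' p) ->
          (forall p, L' p -> L p) \/ (forall p, L' p)] -> two_sided_ideal d L)
  (L : dpoly R I -> Prop) : gideal m L -> ~ L (done_ R I) ->
  exists M, [/\ two_sided_ideal d M, (forall p, L p -> M p) & ~ M (done_ R I)].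
Proof.
move=> hL hL1.
pose Good (A : set (dpoly R I)) :=
  [/\ gideal m A, (forall p, L p -> A p) & ~ A (done_ R I)].
have Hall : forall A : set (dpoly R I), gideal m A -> A (done_ R I) -> forall p, A p.
  move=> A [[hs _ _ _] hm] h1 p; exact: (hs _ _ (Hunit p) (hm p _ h1)).
pose P := [set A : set (dpoly R I) | A = set0 \/ Good A].
have [A [PA Amax]] : exists A, P A /\ forall B, A `<` B -> ~ P B.
  apply: Zorn_bigcup => F FP Ftot.
  have gF : forall X p, F X -> X p -> Good X.
    by move=> X p FX Xp; case: (FP X FX) => // EX; rewrite EX in Xp.
  case: (pselect (exists X, F X /\ exists p, X p)) => [[X0 [FX0 [p0 Xp0]]]|nF].
  - right; have [[[hs h0 ha hn] hm] hLX hX1] := gF X0 p0 FX0 Xp0.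
    split; [split; [split|] | |].
    + move=> p q e [X FX Xp]; exists X => //.
      have [[[hs' _ _ _] _] _ _] := gF X p FX Xp; exact: hs' e Xp.
    + by exists X0.
    + move=> p q [X FX Xp] [Y FY Yq].
      case: (Ftot X Y FX FY) => sXY.
      * have [[[_ _ ha' _] _] _ _] := gF Y q FY Yq; exists Y => //.
        exact: ha' (sXY _ Xp) Yq.
      * have [[[_ _ ha' _] _] _ _] := gF X p FX Xp; exists X => //.
        exact: ha' Xp (sXY _ Yq).
    + move=> p [X FX Xp]; have [[[_ _ _ hn'] _] _ _] := gF X p FX Xp.
      by exists X => //; exact: hn'.
    + move=> s p [X FX Xp]; have [[_ hm'] _ _] := gF X p FX Xp.
      by exists X => //; exact: hm'.
    + by move=> p Lp; exists X0 => //; exact: hLX.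
    + by case=> X FX Xd; have [_ _] := gF X _ FX Xd; apply.
  - left; apply/funext => p; apply/propext; split => // -[X FX Xp].
    by apply: nF; exists X; split => //; exists p.
have GA : Good A.
  case: PA => // EA; exfalso; apply: (Amax L).
    split; first by rewrite EA => p.
    by move=> h; have [[_ h0 _ _] _] := hL; have := h _ h0; rewrite EA.
  by right; split.
case: GA => gA LA A1.
exists A; split => //; apply: Hqd; split => //; first by exists (done_ R I).
move=> L' gL' AL'; case: (pselect (L' (done_ R I))) => h1.
  by right; exact: Hall.
left => p L'p; case: (pselect (A p)) => // nAp; exfalso; apply: (Amax L').
  by split => // h; apply: nAp; exact: h.
by right; split => // q Lq; exact: AL' (LA q Lq).
Qed.


Lemma dcoef0 w : dcoef ([::] : dpoly R I) w = 0.
Proof. by rewrite dcoefE big_nil. Qed.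

Lemma Jconst (hsimple : simple_ring R) M : two_sided_ideal d M -> ~ M (done_ R I) ->
  forall p r, M p -> (forall w, dcoef p w = if [::] == w then r else 0) -> r = 0.
Proof.
move=> [[[hs h0 ha hn] hml] [_ hmr]] nM1.
pose J (r : R) := M [:: (r, [::])].
have toJ : forall p r, M p -> (forall w, dcoef p w = if [::] == w then r else 0) -> J r.
  move=> p r Mp e; apply: (hs p) => // w; rewrite e dcoef_cons dcoef0 addr0 //.
have hJ : ring_ideal J.
  split.
  - by apply: (toJ (dzero R I)) => // w; rewrite dcoef0; case: ifP.
  - move=> a b Ja Jb; apply: (toJ _ _ (ha _ _ Ja Jb)) => w.
    by rewrite /dadd /= !dcoef_cons dcoef0; case: ifP => _; rewrite ?addr0.
  - by move=> a Ja; exact: (hn _ Ja).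
  - by move=> r a Ja; exact: (hml [:: (r, [::])] _ Ja).
  - by move=> r a Ja; exact: (hmr [:: (r, [::])] _ Ja).
case: (hsimple J hJ) => [z | all].
  by move=> p r Mp e; apply: z; exact: toJ Mp e.
by move=> *; exfalso; apply: nM1; exact: (all 1).
Qed.

Lemma dzero_of (hsimple : simple_ring R) M i : two_sided_ideal d M -> ~ M (done_ R I) ->
  M [:: (1, [:: i])] -> forall b, d i b = 0.
Proof.
move=> hM nM Mx b; have [[[hs h0 ha hn] hml] [_ hmr]] := hM.
apply: (Jconst hsimple hM nM (p := dadd (dmul d [:: (1,[:: i])] [:: (b,[::])])
   (dopp (dmul d [:: (b,[::])] [:: (1,[:: i])])))).
  by apply: ha; [exact: hmr | apply: hn; exact: hml].
move=> w /=; rewrite !dcoef_cons dcoef0 /=.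
case: ([:: i] == w); case: ([::] == w);
  rewrite ?mul1r ?mulr1 ?addr0 ?add0r ?oppr0 //.
- by rewrite addrCA subrr addr0.
- by rewrite subrr.
Qed.


Lemma comm_of (hsimple : simple_ring R) (hd0 : forall i a, d i a = 0) M i a :
  two_sided_ideal d M -> ~ M (done_ R I) ->
  M [:: (1, [:: i]); (- a, [::])] -> forall b, a * b = b * a.
Proof.
move=> hM nM Mx b; have [[[hs h0 ha hn] hml] [_ hmr]] := hM.
suff : b * a - a * b = 0 by move/eqP; rewrite subr_eq0 => /eqP.
apply: (Jconst hsimple hM nM (p := dadd (dmul d [:: (1,[:: i]); (- a, [::])] [:: (b,[::])])
   (dopp (dmul d [:: (b,[::])] [:: (1,[:: i]); (- a, [::])])))).
  by apply: ha; [exact: hmr | apply: hn; exact: hml].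
move=> w /=; rewrite !dcoef_cons dcoef0 /= hd0.
case: w => [|j w'].
  by rewrite /= ?mulr0 ?mul1r !add0r !addr0 mulNr mulrN opprK addrC.
case: ([:: i] == j :: w') => /=;
  by rewrite ?mulr0 ?mul1r ?mulr1 ?add0r ?addr0 ?subrr.
Qed.

Lemma single_l (hd0 : forall i a, d i a = 0) M u v :
  two_sided_ideal d M -> ~ M (done_ R I) ->
  M [:: (1, [:: u])] -> ~ M [:: (1, [:: u; v]); (-1, [::])].
Proof.
move=> hM nM Mx Mq; have [[[hs h0 ha hn] hml] [_ hmr]] := hM.
apply: nM; apply: (hs (dadd (dmul d [:: (1,[:: u])] [:: (1,[:: v])]) (dopp [:: (1, [:: u; v]); (-1, [::])]))).
  move=> w /=; rewrite !dcoef_cons dcoef0 /= hd0.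
  rewrite !mulr0 if_same ?mul1r.
  case: w => [|j w']; first by rewrite /= !add0r opprK addr0.
  by case: ([:: u; v] == j :: w') => /=; rewrite ?add0r ?addr0 ?subrr.
by apply: ha; [exact: hmr | apply: hn].
Qed.

Lemma single_r (hd0 : forall i a, d i a = 0) M u v :
  two_sided_ideal d M -> ~ M (done_ R I) ->
  M [:: (1, [:: u])] -> ~ M [:: (1, [:: v; u]); (-1, [::])].
Proof.
move=> hM nM Mx Mq; have [[[hs h0 ha hn] hml] [_ hmr]] := hM.
apply: nM; apply: (hs (dadd (dmul d [:: (1,[:: v])] [:: (1,[:: u])]) (dopp [:: (1, [:: v; u]); (-1, [::])]))).
  move=> w /=; rewrite !dcoef_cons dcoef0 /= hd0.
  rewrite !mulr0 if_same ?mul1r.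
  case: w => [|j w']; first by rewrite /= !add0r opprK addr0.
  by case: ([:: v; u] == j :: w') => /=; rewrite ?add0r ?addr0 ?subrr.
by apply: ha; [exact: hml | apply: hn].
Qed.


Lemma FLall (T : Type) (F : T -> R -> seq I -> R) : (forall t, addF (F t)) ->
  dadditive (fun p => forall t, Phi (F t) p = 0).
Proof.
move=> hF; split.
- by move=> p q e h t; have [hs _ _ _] := FL_add (hF t); exact: hs e (h t).
- by move=> t; have [_ h0 _ _] := FL_add (hF t); exact: h0.
- by move=> p q hp hq t; have [_ _ ha _] := FL_add (hF t); exact: ha (hp t) (hq t).
- by move=> p hp t; have [_ _ _ hn] := FL_add (hF t); exact: hn (hp t).
Qed.

Definition Gpl (a : R) (x : R) (u : seq I) : R := x * a ^+ size u.
Definition Gpr (a : R) (x : R) (u : seq I) : R := a ^+ size u * x.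

Lemma Gpl_add a : addF (Gpl a).
Proof. by move=> w x y; rewrite /Gpl mulrDl. Qed.
Lemma Gpr_add a : addF (Gpr a).
Proof. by move=> w x y; rewrite /Gpr mulrDr. Qed.

Lemma Phi_pow_l (hd0 : forall i a, d i a = 0) a s p :
  Phi (Gpl a) (dmul d s p) = \sum_(x <- s) x.1 * Phi (Gpl a) p * a ^+ size x.2.
Proof.
rewrite (Phi_dmul0 hd0 (Gpl_add a)); apply: eq_bigr => x _.
rewrite /Phi mulr_sumr mulr_suml; apply: eq_bigr => t _.
by rewrite /Gpl size_cat addnC exprD !mulrA.
Qed.

Lemma Phi_pow_r (hd0 : forall i a, d i a = 0) a s p :
  Phi (Gpr a) (dmul d p s) = \sum_(t <- s) a ^+ size t.2 * Phi (Gpr a) p * t.1.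
Proof.
rewrite (Phi_dmul0 hd0 (Gpr_add a)) exchange_big /=; apply: eq_bigr => t _.
rewrite /Phi mulr_sumr mulr_suml; apply: eq_bigr => x _.
by rewrite /Gpr size_cat addnC exprD !mulrA.
Qed.

Definition Gal (f : I -> option bool -> option bool) (bb : bool) (x : R) (u : seq I) : R :=
  x * (foldr f (Some false) u == Some bb)%:R.
Definition Gar (f : I -> option bool -> option bool) (bb : bool) (x : R) (u : seq I) : R :=
  x * (foldl (fun e i => f i e) (Some false) u == Some bb)%:R.

Lemma Gal_add f bb : addF (Gal f bb).
Proof. by move=> w x y; rewrite /Gal mulrDl. Qed.
Lemma Gar_add f bb : addF (Gar f bb).
Proof. by move=> w x y; rewrite /Gar mulrDl. Qed.

Lemma decomp (e : option bool) (g : option bool -> option bool) bb :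
  g None = None ->
  ((g e == Some bb)%:R : R) =
    \sum_(c : bool) ((e == Some c)%:R * (g (Some c) == Some bb)%:R).
Proof.
move=> gN; case: e => [c|].
  rewrite (bigD1 c) //= eqxx mul1r big1 ?addr0 // => c' /negbTE.
  by rewrite eq_sym => h; rewrite (_ : (Some c == Some c') = false) ?mul0r //; apply/eqP => -[E]; rewrite E eqxx in h.
by rewrite gN big1 // => c _; rewrite mul0r.
Qed.

Lemma foldrN (f : I -> option bool -> option bool) (fN : forall i, f i None = None) u :
  foldr f None u = None.
Proof. by elim: u => //= i u ->. Qed.

Lemma foldlN (f : I -> option bool -> option bool) (fN : forall i, f i None = None) u :
  foldl (fun e i => f i e) None u = None.
Proof. by elim: u => //= i u; rewrite fN. Qed.

Lemma auto_l (hd0 : forall i a, d i a = 0) f (fN : forall i, f i None = None) s p :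
  (forall bb, Phi (Gal f bb) p = 0) -> forall bb, Phi (Gal f bb) (dmul d s p) = 0.
Proof.
move=> hp bb; rewrite (Phi_dmul0 hd0 (Gal_add f bb)) big1 // => x _.
transitivity (\sum_(c : bool) x.1 * Phi (Gal f (c)) p *
                 (foldr f (Some c) x.2 == Some bb)%:R).
  rewrite /Phi; under [RHS]eq_bigr => c _ do rewrite mulr_sumr mulr_suml.
  rewrite [RHS]exchange_big /=; apply: eq_bigr => t _.
  rewrite /Gal foldr_cat (@decomp _ (fun e => foldr f e x.2) bb (foldrN fN x.2)).
  rewrite mulr_sumr; apply: eq_bigr => c _.
  by rewrite !mulrA.
by apply: big1 => c _; rewrite hp mulr0 mul0r.
Qed.


Lemma auto_r (hd0 : forall i a, d i a = 0) f (fN : forall i, f i None = None) s p :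
  (forall bb, Phi (Gar f bb) p = 0) -> forall bb, Phi (Gar f bb) (dmul d p s) = 0.
Proof.
move=> hp bb; rewrite (Phi_dmul0 hd0 (Gar_add f bb)) exchange_big big1 //= => t _.
transitivity (\sum_(c : bool) Phi (Gar f c) p * t.1 *
                 (foldl (fun e i => f i e) (Some c) t.2 == Some bb)%:R).
  rewrite /Phi; under [RHS]eq_bigr => c _ do rewrite !mulr_suml.
  rewrite [RHS]exchange_big /=; apply: eq_bigr => x _.
  rewrite /Gar foldl_cat (@decomp _ (fun e => foldl (fun e i => f i e) e t.2) bb (foldlN fN t.2)).
  rewrite mulr_sumr; apply: eq_bigr => c _.
  rewrite !mulrA; congr (_ * _); rewrite -!mulrA; congr (_ * _).
  exact: commr_nat.
by apply: big1 => c _; rewrite hp !mul0r.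
Qed.

End Main.

Theorem lemma5p2 (R : nzRingType) (I : countType) (i0 : I)
    (d : I -> R -> R)
    (hsimple : simple_ring R)
    (hder : forall i, is_derivation (d i))
    (hqd : left_quasi_duo d \/ right_quasi_duo d) :
  is_field R /\ (forall i a, d i a = 0) /\ (forall i : I, i = i0).
Proof.
have keyL : left_quasi_duo d -> forall L, left_ideal d L -> ~ L (done_ R I) ->
    exists M, [/\ two_sided_ideal d M, (forall p, L p -> M p) & ~ M (done_ R I)].
  move=> hq L hL hL1.
  exact: (@key R I d (fun s p => dmul d s p) (dmul_unitr hder) (fun L h => hq L h) L hL hL1).
have keyR : right_quasi_duo d -> forall L, right_ideal d L -> ~ L (done_ R I) ->
    exists M, [/\ two_sided_ideal d M, (forall p, L p -> M p) & ~ M (done_ R I)].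
  move=> hq L hL hL1.
  exact: (@key R I d (fun s p => dmul d p s) (@dmul_unitl R I d) (fun L h => hq L h) L hL hL1).
have one0 : (1 : R) <> 0 by apply/eqP; exact: oner_neq0.
have hd0 : forall i a, d i a = 0.
  move=> i b; case: hqd => hq.
  - have hL : left_ideal d (FL (@Gk R I)).
      split; first exact: FL_add (@Gk_add R I).
      move=> s p; rewrite /FL kap_dmul // => ->.
      by apply: big1 => x _; rewrite (add_zero (lam_add hder x.2)) mulr0.
    have hL1 : ~ FL (@Gk R I) (done_ R I).
      by rewrite /FL /Phi big_cons big_nil /Gk /= addr0.
    have [M [hM hLM nM]] := keyL hq _ hL hL1.
    apply: (dzero_of hsimple hM nM); apply: hLM.
    by rewrite /FL /Phi big_cons big_nil /Gk /= addr0.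
  - have hL : right_ideal d (FL (rho0 d)).
      split; first exact: FL_add (rho0_add hder).
      move=> s p; rewrite /FL (rho_dmul hder) => ->.
      by apply: big1 => t _; rewrite mul0r; exact: (add_zero (rho0_add hder t.2)).
    have hL1 : ~ FL (rho0 d) (done_ R I).
      by rewrite /FL /Phi big_cons big_nil /= addr0.
    have [M [hM hLM nM]] := keyR hq _ hL hL1.
    apply: (dzero_of hsimple hM nM); apply: hLM.
    by rewrite /FL /Phi big_cons big_nil /= (der1 (hder i)) oppr0 addr0.
have hcomm : forall a b : R, a * b = b * a.
  move=> a b; case: hqd => hq.
  - have hL : left_ideal d (FL (@Gpl R I a)).
      split; first exact: FL_add (Gpl_add a).
      move=> s p; rewrite /FL (Phi_pow_l hd0) => ->.
      by apply: big1 => x _; rewrite mulr0 mul0r.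
    have hL1 : ~ FL (@Gpl R I a) (done_ R I).
      by rewrite /FL /Phi big_cons big_nil /Gpl /= expr0 mulr1 addr0.
    have [M [hM hLM nM]] := keyL hq _ hL hL1.
    apply: (comm_of hsimple hd0 hM nM); apply: hLM.
    by rewrite /FL /Phi !big_cons big_nil /Gpl /= expr1 expr0 mul1r mulr1 addr0 subrr.
  - have hL : right_ideal d (FL (@Gpr R I a)).
      split; first exact: FL_add (Gpr_add a).
      move=> s p; rewrite /FL (Phi_pow_r hd0) => ->.
      by apply: big1 => x _; rewrite mulr0 mul0r.
    have hL1 : ~ FL (@Gpr R I a) (done_ R I).
      by rewrite /FL /Phi big_cons big_nil /Gpr /= expr0 mulr1 addr0.
    have [M [hM hLM nM]] := keyR hq _ hL hL1.
    apply: (comm_of hsimple hd0 hM nM); apply: hLM.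
    by rewrite /FL /Phi !big_cons big_nil /Gpr /= expr1 expr0 mul1r mulr1 addr0 subrr.
split.
  split; first exact: hcomm.
  move=> a /eqP a0.
  pose J x := exists r, x = a * r.
  have hJ : ring_ideal J.
    split.
    - by exists 0; rewrite mulr0.
    - by move=> x y [r ->] [s ->]; exists (r + s); rewrite mulrDr.
    - by move=> x [r ->]; exists (- r); rewrite mulrN.
    - by move=> r x [s ->]; exists (r * s); rewrite mulrA (hcomm r a) -mulrA.
    - by move=> r x [s ->]; exists (s * r); rewrite mulrA.
  case: (hsimple J hJ) => [z | all].
    by exfalso; apply: a0; apply: z; exists 1; rewrite mulr1.
  have [r hr] := all 1.
  by exists r; split; [rewrite -hr | rewrite hcomm -hr].
split; first exact: hd0.
move=> i; case: (eqVneq i i0) => // hne; exfalso.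
pose f := fun j (e : option bool) => if j == i0 then (if e == Some true then Some false else None)
  else if j == i then (if e == Some false then Some true else None) else None.
have fN : forall j, f j None = None by move=> j; rewrite /f; case: (j == i0); case: (j == i).
have hii0 : (i == i0) = false by apply/negbTE.
case: hqd => hq.
- pose L := fun p => forall bb, Phi (@Gal R I f bb) p = 0.
  have hL : left_ideal d L.
    split; first exact: FLall (@Gal_add R I f).
    by move=> s p hp; rewrite /L in hp *; exact: (@auto_l _ _ d hd0 f fN s p hp).
  have hL1 : ~ L (done_ R I).
    by move=> h; have := h false; rewrite /Phi big_cons big_nil /Gal /= addr0 mul1r.
  have [M [hM hLM nM]] := keyL hq _ hL hL1.
  apply: (single_l hd0 hM nM (u := i0) (v := i)); apply: hLM => bb.
    by rewrite /Phi big_cons big_nil /Gal /= /f eqxx /= mulr0 addr0.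
  by rewrite /Phi !big_cons big_nil /Gal /= /f hii0 !eqxx /= mul1r mulN1r addr0 subrr.
- pose L := fun p => forall bb, Phi (@Gar R I f bb) p = 0.
  have hL : right_ideal d L.
    split; first exact: FLall (@Gar_add R I f).
    by move=> s p hp; rewrite /L in hp *; exact: (@auto_r _ _ d hd0 f fN s p hp).
  have hL1 : ~ L (done_ R I).
    by move=> h; have := h false; rewrite /Phi big_cons big_nil /Gar /= addr0 mul1r.
  have [M [hM hLM nM]] := keyR hq _ hL hL1.
  apply: (single_r hd0 hM nM (u := i0) (v := i)); apply: hLM => bb.
    by rewrite /Phi big_cons big_nil /Gar /= /f eqxx /= mulr0 addr0.
  by rewrite /Phi !big_cons big_nil /Gar /= /f hii0 !eqxx /= mul1r mulN1r addr0 subrr.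
Unshelve. all: exact: i0. Qed.
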